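(* Let $n,m,n_f,\ell\in\mathbb{N}$, let $w>1$ be a number representable with $n$ bits of which the first $m$ are its integer part, let $F\in[0,1]$, and let $f\in[0,1]$ be given with $n_f$ bits after the binary point such that $|F-f|\leq 2^{-n_f}$. Then the value $\hat{z}$ returned by Algorithm FractionalPower$(w,f,n,m,n_f,\ell)$ (described in the context) satisfies $$|\hat{z}-w^F|\leq\left(\frac12\right)^{\ell-1}+\frac{w\ln w}{2^{n_f}}.$$
   Context: Fixed precision representation: a number $w\ge 0$ ''given by $n$ bits of which the first $m$ correspond to its integer part'' means $w=\sum_{j=m-n}^{m-1} w^{(j)}2^j$ with $w^{(j)}\in\{0,1\}$. For $x\geq 0$, ''truncating $x$ to $b$ bits after the binary point'' means replacing $x$ by $\lfloor 2^b x\rfloor/2^b$. All arithmetic inside a step is performed exactly; only the stated truncations introduce error. Algorithm SQRT$(w,n,m,b)$ (input $w\geq 1$): if $w=1$, return $1$. Otherwise: let $p\in\mathbb{N}$ with $2^{p}>w\geq 2^{p-1}$ and set $\hat{x}_0=2^{-p}$; let $s=\lceil\log_2 b\rceil$; for $i=1,\dots,s$ compute exactly $x_i=-w\hat{x}_{i-1}^2+2\hat{x}_{i-1}$ and let $\hat{x}_i$ be $x_i$ truncated to $b$ bits. Then let $q\in\mathbb{N}$ with $2^{1-q}>\hat{x}_s\geq 2^{-q}$ and set $\hat{y}_0=2^{\lfloor (q-1)/2\rfloor}$; for $j=1,\dots,s$ compute exactly $y_j=\frac12(3\hat{y}_{j-1}-\hat{x}_s\hat{y}_{j-1}^3)$ and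 let $\hat{y}_j$ be $y_j$ truncated to $b$ bits. Return $\hat{y}_s$. Algorithm PowerOf2Roots$(w,k,n,m,b)$: set $\hat{z}_1=$ SQRT$(w,n,m,b)$; for $i=2,\dots,k$ set $\hat{z}_i=$ SQRT$(\hat{z}_{i-1},m+b,m,b)$. Return $\hat{z}_1,\dots,\hat{z}_k$. Algorithm FractionalPower$(w,f,n,m,n_f,\ell)$ (input $w\geq1$, $f=\sum_{i=1}^{n_f}f_i2^{-i}$ or $f=1$, bits $f_i\in\{0,1\}$): set $b=\max\{n,n_f,\lceil 5(\ell+2m+\ln n_f)\rceil,40\}$. If $f=1$ return $w$; if $f=0$ return $1$. Let $\hat{w}_1,\dots,\hat{w}_{n_f}$ be the outputs of PowerOf2Roots$(w,n_f,n,m,b)$. Set $\hat{z}=1$; for $i=1,\dots,n_f$, if $f_i=1$ replace $\hat{z}$ by $\hat{z}\hat{w}_i$ truncated to $b$ bits after the binary point. Return $\hat{z}$. *)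

(* Defs.v *)
From Stdlib Require Import Reals ZArith Arith.
Open Scope R_scope.

Definition floorR (x : R) : Z := (up x - 1)%Z.
Definition ceilR (x : R) : Z := (- floorR (- x))%Z.

Definition trunc (b : nat) (x : R) : R := IZR (floorR (2 ^ b * x)) / 2 ^ b.

Definition flog2 (x : R) : Z := floorR (ln x / ln 2).

(* Newton iteration for 1/w : x_i = -w xhat_{i-1}^2 + 2 xhat_{i-1}, then truncate *)
Fixpoint inv_iter (b : nat) (w x0 : R) (k : nat) : R :=
  match k with
  | O => x0
  | S k' => let xh := inv_iter b w x0 k' in trunc b (- w * xh ^ 2 + 2 * xh)
  end.

(* Newton iteration for 1/sqrt(x) : y_j = (3 yhat_{j-1} - x yhat_{j-1}^3)/2, then truncate *)
Fixpoint isqrt_iter (b : nat) (x y0 : R) (k : nat) : R :=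
  match k with
  | O => y0
  | S k' => let yh := isqrt_iter b x y0 k' in trunc b ((3 * yh - x * yh ^ 3) / 2)
  end.

(* Algorithm SQRT(w,n,m,b); the parameters n, m only describe the input format
   and do not influence the computation. *)
Definition SQRT (b : nat) (w : R) : R :=
  if Req_EM_T w 1 then 1 else
  let p : nat := (Z.to_nat (flog2 w) + 1)%nat in
  let s : nat := Nat.log2_up b in
  let xs := inv_iter b w (/ 2 ^ p) s in
  let q : Z := (- flog2 xs)%Z in
  let y0 := powerRZ 2 (Z.div (q - 1) 2) in
  isqrt_iter b xs y0 s.

Definition pow2root (b : nat) (w : R) (i : nat) : R := Nat.iter i (SQRT b) w.

(* i-th bit after the binary point of f (for f in [0,1)) *)
Definition fbit (f : R) (i : nat) : bool := Z.odd (floorR (2 ^ i * f)).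

Fixpoint frac_loop (b : nat) (w f : R) (i : nat) : R :=
  match i with
  | O => 1
  | S i' => let z := frac_loop b w f i' in
            if fbit f (S i') then trunc b (z * pow2root b w (S i')) else z
  end.

Definition fp_b (n m nf l : nat) : nat :=
  Nat.max (Nat.max n nf)
    (Nat.max (Z.to_nat (ceilR (5 * (INR l + 2 * INR m + ln (INR nf))))) 40).

Definition FractionalPower (w f : R) (n m nf l : nat) : R :=
  let b := fp_b n m nf l in
  if Req_EM_T f 1 then w else
  if Req_EM_T f 0 then 1 else
  frac_loop b w f nf.

Fixpoint bitsum (bits : nat -> bool) (e : Z) (k : nat) : R :=
  match k with
  | O => 0
  | S k' => bitsum bits e k' + (if bits k' then powerRZ 2 (e + Z.of_nat k') else 0)
  end.

(* w is given by n bits of which the first m are its integer part: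
   w = sum_{j=m-n}^{m-1} w^(j) 2^j *)
Definition fixed_repr (n m : nat) (w : R) : Prop :=
  exists bits : nat -> bool, w = bitsum bits (Z.of_nat m - Z.of_nat n) n.

(* f in [0,1] given with nf bits after the binary point:
   f = 1, or f = sum_{i=1}^{nf} f_i 2^(-i) *)
Definition frac_repr (nf : nat) (f : R) : Prop :=
  f = 1 \/ exists bits : nat -> bool, f = bitsum bits (- Z.of_nat nf) nf.

(* Main.v *)
Require Import Defs.
From Stdlib Require Import Reals ZArith Arith Lra Lia Psatz.
Open Scope R_scope.

Lemma floorR_spec y : IZR (floorR y) <= y < IZR (floorR y) + 1.
Proof. unfold floorR; rewrite minus_IZR; destruct (archimed y); lra. Qed.

Lemma floorR_unique z y : IZR z <= y < IZR z + 1 -> floorR y = z.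
Proof.
  intros [H1 H2]. destruct (floorR_spec y) as [H3 H4].
  assert (A : (z < floorR y + 1)%Z) by (apply lt_IZR; rewrite plus_IZR; lra).
  assert (B : (floorR y < z + 1)%Z) by (apply lt_IZR; rewrite plus_IZR; lra).
  lia.
Qed.

Lemma pow2_pos b : 0 < 2 ^ b.
Proof. apply pow_lt; lra. Qed.

Lemma trunc_spec b x : trunc b x <= x /\ x - trunc b x < / 2 ^ b.
Proof.
  unfold trunc. destruct (floorR_spec (2 ^ b * x)) as [H1 H2].
  pose proof (pow2_pos b). split.
  - apply (Rmult_le_reg_l (2^b)); auto. field_simplify; lra.
  - apply (Rmult_lt_reg_l (2^b)); auto. field_simplify; lra.
Qed.

Lemma trunc_nonneg b x : 0 <= x -> 0 <= trunc b x.
Proof.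
  intro Hx. unfold trunc. destruct (floorR_spec (2 ^ b * x)) as [H1 H2].
  pose proof (pow2_pos b).
  assert (0 <= 2^b * x) by nra.
  assert (A : (-1 < floorR (2 ^ b * x))%Z) by (apply lt_IZR; lra).
  assert (B: 0 <= IZR (floorR (2 ^ b * x))) by (apply IZR_le; lia).
  apply Rmult_le_pos; auto. left; apply Rinv_0_lt_compat; auto.
Qed.

Lemma exp_le a b : a <= b -> exp a <= exp b.
Proof. intros [H|H]. left; apply exp_increasing; auto. subst; lra. Qed.

Definition E2 (k : Z) : R := exp (IZR k * ln 2).

Lemma E2_add a b : E2 (a + b) = E2 a * E2 b.
Proof. unfold E2. rewrite plus_IZR, Rmult_plus_distr_r, exp_plus. reflexivity. Qed.

Lemma E2_pos a : 0 < E2 a.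
Proof. apply exp_pos. Qed.

Lemma ln2_pos : 0 < ln 2.
Proof. rewrite <- ln_1. apply ln_increasing; lra. Qed.

Lemma E2_le a b : (a <= b)%Z -> E2 a <= E2 b.
Proof. intro H. unfold E2. apply exp_le. apply Rmult_le_compat_r. left; apply ln2_pos. apply IZR_le; auto. Qed.

Lemma E2_nat n : E2 (Z.of_nat n) = 2 ^ n.
Proof. unfold E2. rewrite <- INR_IZR_INZ. rewrite <- Rpower_pow by lra. reflexivity. Qed.

Lemma E2_powerRZ k : powerRZ 2 k = E2 k.
Proof. rewrite powerRZ_Rpower by lra. reflexivity. Qed.

Lemma E2_0 : E2 0 = 1.
Proof. unfold E2. simpl. rewrite Rmult_0_l. apply exp_0. Qed.

Lemma E2_1 : E2 1 = 2.
Proof. replace 1%Z with (Z.of_nat 1) by reflexivity. rewrite E2_nat. simpl; lra. Qed.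

Lemma E2_m1 : E2 (-1) = / 2.
Proof. assert (H := E2_add 1 (-1)). simpl in H. rewrite E2_0, E2_1 in H. 
  assert (E2 (-1) = 1/2) by lra. lra. Qed.

Lemma E2_m2 : E2 (-2) = / 4.
Proof. assert (H := E2_add (-1) (-1)). simpl in H. rewrite E2_m1 in H. rewrite H. lra. Qed.

Lemma flog2_spec x : 0 < x -> E2 (flog2 x) <= x < E2 (flog2 x + 1).
Proof.
  intro Hx. unfold flog2. destruct (floorR_spec (ln x / ln 2)) as [H1 H2].
  pose proof ln2_pos.
  set (k := floorR (ln x / ln 2)) in *.
  assert (A : IZR k * ln 2 <= ln x).
  { apply (Rmult_le_reg_r (/ ln 2)). apply Rinv_0_lt_compat; auto. unfold Rdiv in H1. field_simplify; try lra. }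
  assert (B : ln x < (IZR k + 1) * ln 2).
  { apply (Rmult_lt_reg_r (/ ln 2)). apply Rinv_0_lt_compat; auto. unfold Rdiv in H2. field_simplify; try lra. }
  unfold E2. rewrite plus_IZR. split.
  - rewrite <- (exp_ln x) by auto. apply exp_le; auto.
  - rewrite <- (exp_ln x) by auto. apply exp_increasing; auto.
Qed.

Lemma pow_dec x m n : 0 <= x <= 1 -> (m <= n)%nat -> x ^ n <= x ^ m.
Proof.
  intros Hx Hmn. replace n with (m + (n - m))%nat by lia. rewrite pow_add.
  assert (0 <= x ^ m) by (apply pow_le; lra).
  assert (x ^ (n - m) <= 1) by (rewrite <- (pow1 (n - m)); apply pow_incr; lra).
  assert (0 <= x ^ (n-m)) by (apply pow_le; lra). nra.
Qed.

Lemma newton_gen (e : nat -> R) (eta : R) :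
  0 <= eta <= / 1000 -> (forall i, 0 <= e i <= 3/4) ->
  (forall i, e (S i) <= e i ^ 2 + eta) ->
  forall i, e (i + 2)%nat <= (3/4) ^ (2 ^ (i + 2)) + 3 * eta.
Proof.
  intros Heta Hb Hs. induction i.
  - simpl. specialize (Hs 1%nat) as H1. specialize (Hs 0%nat) as H0.
    destruct (Hb 0%nat), (Hb 1%nat), (Hb 2%nat). simpl in *.
    assert (e 1%nat <= 9/16 + eta) by nra.
    assert (e 1%nat ^ 2 <= (9/16 + eta) ^ 2) by (apply pow_incr; lra).
    simpl in *. nra.
  - replace (S i + 2)%nat with (S (i + 2)) by lia.
    set (A := (3/4) ^ (2 ^ (i + 2))) in *.
    assert (HA : (3/4) ^ (2 ^ S (i + 2)) = A ^ 2).
    { unfold A. rewrite <- pow_mult. f_equal. rewrite Nat.pow_succ_r'. lia. }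
    rewrite HA.
    assert (A0 : 0 <= A) by (apply pow_le; lra).
    assert (A1 : A <= (3/4)^4).
    { unfold A. apply pow_dec. lra. replace 4%nat with (2^2)%nat by reflexivity.
      apply Nat.pow_le_mono_r; lia. }
    specialize (Hs (i+2)%nat). destruct (Hb (i+2)%nat). simpl in *. nra.
Qed.

Section Inv.
Variables (b : nat) (z x0 : R).
Hypothesis Hz : 0 < z.
Hypothesis He0 : 0 <= 1 - z * x0 <= 3/4.
Hypothesis Heta : z / 2 ^ b <= / 1000.

Definition ex i := 1 - z * inv_iter b z x0 i.

Lemma inv_step i : 0 <= ex i <= 3/4 -> 0 <= ex (S i) /\ ex (S i) <= ex i ^ 2 + z / 2 ^ b.
Proof.
  intros H. unfold ex in *.
  change (inv_iter b z x0 (S i)) with (trunc b (- z * (inv_iter b z x0 i) ^ 2 + 2 * (inv_iter b z x0 i))).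
  set (x := inv_iter b z x0 i) in *.
  destruct (trunc_spec b (- z * x ^ 2 + 2 * x)) as [T1 T2].
  set (t := trunc b (- z * x ^ 2 + 2 * x)) in *.
  assert (E : 1 - z * (- z * x ^ 2 + 2 * x) = (1 - z * x) ^ 2) by ring.
  pose proof (pow2_pos b).
  assert (z * (- z * x ^ 2 + 2 * x - t) <= z / 2^b).
  { unfold Rdiv. apply Rmult_le_compat_l; lra. }
  assert (z * t <= z * (- z * x ^ 2 + 2 * x)) by (apply Rmult_le_compat_l; lra).
  assert (0 <= (1 - z * x) ^ 2) by (apply pow2_ge_0).
  split; lra.
Qed.

Lemma inv_inv i : 0 <= ex i <= 3/4.
Proof.
  induction i. unfold ex; simpl; auto.
  destruct (inv_step i IHi). pose proof (pow2_pos b).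
  assert (0 <= z / 2^b) by (unfold Rdiv; apply Rmult_le_pos; [lra | left; apply Rinv_0_lt_compat; lra]). nra.
Qed.

Lemma inv_final i : ex (i + 2) <= (3/4) ^ (2 ^ (i + 2)) + 3 * (z / 2 ^ b).
Proof.
  apply newton_gen.
  - pose proof (pow2_pos b). split; auto. unfold Rdiv; apply Rmult_le_pos; [lra | left; apply Rinv_0_lt_compat; lra].
  - apply inv_inv.
  - intro j. apply inv_step, inv_inv.
Qed.
End Inv.

Section ISqrt.
Variables (b : nat) (x y0 : R).
Hypothesis Hx : 0 < x <= 2.
Hypothesis Hy0 : 0 <= y0.
Hypothesis He0 : 0 <= 1 - x * y0 ^ 2 <= 3/4.
Hypothesis Heta : 3 / 2 ^ b <= / 1000.

Definition ey i := 1 - x * isqrt_iter b x y0 i ^ 2.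

Lemma isqrt_step i : 0 <= isqrt_iter b x y0 i -> 0 <= ey i <= 3/4 ->
  0 <= isqrt_iter b x y0 (S i) /\ 0 <= ey (S i) /\ ey (S i) <= ey i ^ 2 + 3 / 2 ^ b.
Proof.
  intros Hy H. unfold ey in *.
  change (isqrt_iter b x y0 (S i)) with (trunc b ((3 * (isqrt_iter b x y0 i) - x * (isqrt_iter b x y0 i) ^ 3) / 2)).
  set (y := isqrt_iter b x y0 i) in *.
  set (e := 1 - x * y ^ 2) in *.
  set (u := (3 * y - x * y ^ 3) / 2).
  assert (Hu : u = y * (2 + e) / 2) by (unfold u, e; field).
  assert (U0 : 0 <= u) by (rewrite Hu; apply Rmult_le_pos; [apply Rmult_le_pos|]; lra).
  destruct (trunc_spec b u) as [T1 T2].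
  pose proof (trunc_nonneg b u U0) as T0.
  set (t := trunc b u) in *.
  assert (Hxu : 1 - x * u ^ 2 = (3 * e^2 + e^3) / 4).
  { rewrite Hu. unfold e. field. }
  pose proof (pow2_pos b).
  assert (Hxu1 : x * u ^ 2 <= 1) by nra.
  assert (Hxu2 : 2 * x * u <= 3).
  { assert (2 * u <= 1 + u^2).
    { assert (H' : 0 <= (u-1)^2) by apply pow2_ge_0.
      replace ((u-1)^2) with (u^2 - 2*u + 1) in H' by ring. lra. }
    assert (x * (2 * u) <= x * (1 + u^2)) by (apply Rmult_le_compat_l; lra). nra. }
  assert (D : x * (u ^ 2 - t ^ 2) <= 3 / 2 ^ b).
  { assert (u^2 - t^2 = (u - t) * (u + t)) by ring.
    assert (x * ((u - t) * (u + t)) <= x * (/ 2^b) * (2 * u)).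
    { rewrite <- Rmult_assoc. apply Rmult_le_compat. nra. nra. nra. lra. }
    unfold Rdiv. nra. }
  assert (t ^ 2 <= u ^ 2) by nra.
  split; auto. split. nra. nra.
Qed.

Lemma isqrt_inv i : 0 <= isqrt_iter b x y0 i /\ 0 <= ey i <= 3/4.
Proof.
  induction i. unfold ey; simpl; auto.
  destruct IHi as [A B]. destruct (isqrt_step i A B) as [C [D F]].
  pose proof (pow2_pos b).
  assert (0 <= 3 / 2^b) by (unfold Rdiv; apply Rmult_le_pos; [lra | left; apply Rinv_0_lt_compat; lra]). split; auto. nra.
Qed.

Lemma isqrt_final i : ey (i + 2) <= (3/4) ^ (2 ^ (i + 2)) + 3 * (3 / 2 ^ b).
Proof.
  apply newton_gen.
  - pose proof (pow2_pos b). split; auto. unfold Rdiv; apply Rmult_le_pos; [lra | left; apply Rinv_0_lt_compat; lra].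
  - intro j; apply isqrt_inv.
  - intro j. destruct (isqrt_inv j) as [A B]. apply isqrt_step; auto.
Qed.
End ISqrt.

Lemma sqrt_bound_final z xs y E m :
  0 < z -> z <= 2 ^ m -> 1 <= 2 ^ m -> 0 <= y -> 0 <= E <= /2 ->
  0 <= 1 - z * xs <= E -> 0 <= 1 - xs * y ^ 2 <= E ->
  Rabs (y - sqrt z) <= 2 * 2 ^ m * E.
Proof.
  intros Hz Hzm Hm Hy HE Hex Hey.
  set (r := sqrt z).
  assert (Hr2 : r * r = z) by (apply sqrt_sqrt; lra).
  assert (Hr0 : 0 < r) by (apply sqrt_lt_R0; lra).
  assert (Hrm : r <= 2 ^ m).
  { destruct (Rle_dec r 1). lra. nra. }
  assert (Hxs : xs * z = 1 - (1 - z * xs)) by ring.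
  assert (Hxs0 : 0 < xs).
  { assert (0 < xs * z) by lra. nra. }
  assert (K : xs * (y^2 - z) = (1 - z * xs) - (1 - xs * y^2)) by ring.
  assert (K2 : - (2 * z * E) <= y^2 - z <= 2 * z * E).
  { assert (xs * z >= 1/2) by lra.
    split.
    - assert (xs * (y^2 - z) >= - E) by lra.
      assert (xs * (y^2 - z) >= xs * (- 2 * z * E)) by nra. nra.
    - assert (xs * (y^2 - z) <= E) by lra.
      assert (xs * (y^2 - z) <= xs * (2 * z * E)) by nra. nra. }
  assert (y^2 - z = (y - r) * (y + r)) by (rewrite <- Hr2; ring).
  apply Rabs_le. rewrite <- Hr2 in K2.
  destruct (Rle_dec r y).
  - split. nra.
    assert ((y - r) * r <= 2 * r * r * E) by nra.
    assert (y - r <= 2 * r * E) by (apply (Rmult_le_reg_r r); nra). nra.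
  - split; [| nra].
    assert ((r - y) * r <= 2 * r * r * E) by nra.
    assert (r - y <= 2 * r * E) by (apply (Rmult_le_reg_r r); nra). nra.
Qed.

Lemma pow_b_large b : (40 <= b)%nat -> 3 / 2 ^ b <= / 1000.
Proof.
  intro Hb. assert (2 ^ 12 <= 2 ^ b) by (apply Rle_pow; lra || lia).
  pose proof (pow2_pos b). simpl in H.
  apply (Rmult_le_reg_r (2^b)); auto. field_simplify; lra.
Qed.

Lemma SQRT_err b m z : (40 <= b)%nat -> 2 ^ m / 2 ^ b <= / 1000 -> 1 <= 2 ^ m ->
  (3/4) ^ b + 9 * 2 ^ m / 2 ^ b <= / 2 ->
  / 2 <= z <= 2 ^ m ->
  Rabs (SQRT b z - sqrt z) <= 2 * 2 ^ m * ((3/4) ^ b + 9 * 2 ^ m / 2 ^ b).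
Proof.
  intros Hb Hmb Hm1 HE [Hz1 Hz2].
  set (E := (3/4) ^ b + 9 * 2 ^ m / 2 ^ b) in *.
  pose proof (pow2_pos b) as Hpb.
  assert (HE0 : 0 <= E).
  { unfold E. assert (0 <= (3/4)^b) by (apply pow_le; lra).
    assert (0 <= 9 * 2^m / 2^b). { unfold Rdiv. apply Rmult_le_pos. lra. left; apply Rinv_0_lt_compat; lra. } lra. }
  unfold SQRT. destruct (Req_EM_T z 1) as [->|Hne].
  { rewrite sqrt_1. rewrite Rminus_diag, Rabs_R0. nra. }
  cbv zeta.
  set (k := flog2 z).
  set (p := (Z.to_nat k + 1)%nat).
  set (s := Nat.log2_up b).
  set (xs := inv_iter b z (/ 2 ^ p) s).
  set (k' := flog2 xs).
  set (d := ((- k' - 1) / 2)%Z).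
  set (y0 := powerRZ 2 d).
  assert (Hs : (b <= 2 ^ s)%nat /\ (2 <= s)%nat).
  { destruct (Nat.log2_up_spec b) as [_ H2]. lia. fold s in H2. split; auto.
    destruct (le_lt_dec 2 s); auto. exfalso.
    assert (2 ^ s <= 2 ^ 1)%nat by (apply Nat.pow_le_mono_r; lia). simpl in *. lia. }
  destruct Hs as [Hs1 Hs2].
  assert (Hpow : (3/4) ^ (2 ^ s) <= (3/4) ^ b) by (apply pow_dec; lra || lia).
  assert (Hs3 : s = (s - 2 + 2)%nat) by lia.
  assert (Hzpos : 0 < z) by lra.
  destruct (flog2_spec z Hzpos) as [Hk1 Hk2]. fold k in Hk1, Hk2.
  assert (Hk : (-1 <= k)%Z).
  { destruct (Z_lt_le_dec k (-1)); auto. exfalso.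
    assert (E2 (k + 1) <= E2 (-1)) by (apply E2_le; lia). rewrite E2_m1 in H. lra. }
  assert (HP1 : (Z.of_nat p - 2 <= k)%Z) by (unfold p; lia).
  assert (HP2 : (k + 1 <= Z.of_nat p)%Z) by (unfold p; lia).
  assert (H2p : 2 ^ p = E2 (Z.of_nat p)) by (rewrite E2_nat; auto).
  assert (Hlo : 2 ^ p / 4 <= z).
  { assert (E2 (Z.of_nat p - 2) <= E2 k) by (apply E2_le; lia).
    replace (Z.of_nat p - 2)%Z with (Z.of_nat p + -2)%Z in H by lia.
    rewrite E2_add, E2_m2, <- H2p in H. lra. }
  assert (Hhi : z < 2 ^ p).
  { assert (E2 (k + 1) <= E2 (Z.of_nat p)) by (apply E2_le; lia). lra. }
  pose proof (pow2_pos p) as Hpp.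
  assert (He0 : 0 <= 1 - z * / 2 ^ p <= 3/4).
  { split.
    - assert (z * / 2^p <= 1). { apply (Rmult_le_reg_r (2^p)); auto. field_simplify; lra. } lra.
    - assert (/4 <= z * / 2^p). { apply (Rmult_le_reg_r (2^p)); auto. field_simplify; lra. } lra. }
  assert (Heta : z / 2 ^ b <= / 1000).
  { apply Rle_trans with (2^m / 2^b); auto. unfold Rdiv. apply Rmult_le_compat_r; auto.
    left; apply Rinv_0_lt_compat; auto. }
  pose proof (inv_inv b z (/ 2 ^ p) Hzpos He0 Heta s) as Hex.
  pose proof (inv_final b z (/ 2 ^ p) Hzpos He0 Heta (s - 2)) as Hex2.
  rewrite <- Hs3 in Hex2. unfold ex in Hex, Hex2. fold xs in Hex, Hex2.
  assert (HexE : 1 - z * xs <= E).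
  { unfold E. assert (z / 2^b <= 2^m / 2^b).
    { unfold Rdiv. apply Rmult_le_compat_r; auto. left; apply Rinv_0_lt_compat; auto. }
    assert (9 * 2^m / 2^b = 9 * (2^m/2^b)) by (unfold Rdiv; ring).
    assert (0 <= z / 2^b) by (unfold Rdiv; apply Rmult_le_pos; [lra | left; apply Rinv_0_lt_compat; auto]).
    lra. }
  assert (Hxs0 : 0 < xs).
  { assert (0 < z * xs) by lra. nra. }
  assert (Hxs2 : xs <= 2) by nra.
  destruct (flog2_spec xs Hxs0) as [Hk'1 Hk'2]. fold k' in Hk'1, Hk'2.
  assert (Hdm := Z.div_mod (- k' - 1) 2 ltac:(lia)).
  assert (Hdb := Z.mod_pos_bound (- k' - 1) 2 ltac:(lia)). fold d in Hdm.
  assert (Hd1 : (- k' - 2 <= 2 * d)%Z) by lia.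
  assert (Hd2 : (2 * d <= - k' - 1)%Z) by lia.
  assert (Hy0 : y0 = E2 d) by (unfold y0; apply E2_powerRZ).
  assert (Hy02 : y0 ^ 2 = E2 (d + d)) by (rewrite E2_add, Hy0; ring).
  assert (Hy0p : 0 <= y0) by (rewrite Hy0; left; apply E2_pos).
  assert (He0' : 0 <= 1 - xs * y0 ^ 2 <= 3/4).
  { rewrite Hy02. split.
    - assert (E2 (d + d) <= E2 (- k' - 1)) by (apply E2_le; lia).
      assert (xs * E2 (d + d) < E2 (k' + 1) * E2 (- k' - 1)).
      { apply Rle_lt_trans with (xs * E2 (- k' - 1)).
        apply Rmult_le_compat_l; lra. apply Rmult_lt_compat_r. apply E2_pos. auto. }
      rewrite <- E2_add in H0. replace (k' + 1 + (- k' - 1))%Z with 0%Z in H0 by lia.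
      rewrite E2_0 in H0. lra.
    - assert (E2 (- k' - 2) <= E2 (d + d)) by (apply E2_le; lia).
      assert (E2 k' * E2 (- k' - 2) <= xs * E2 (d + d)).
      { apply Rmult_le_compat; auto; left; apply E2_pos. }
      rewrite <- E2_add in H0. replace (k' + (- k' - 2))%Z with (-2)%Z in H0 by lia.
      rewrite E2_m2 in H0. lra. }
  assert (Heta' : 3 / 2 ^ b <= / 1000) by (apply pow_b_large; auto).
  assert (Hxs : 0 < xs <= 2) by lra.
  pose proof (isqrt_inv b xs y0 Hxs Hy0p He0' Heta' s) as [Hy Hey].
  pose proof (isqrt_final b xs y0 Hxs Hy0p He0' Heta' (s - 2)) as Hey2.
  rewrite <- Hs3 in Hey2. unfold ey in Hey, Hey2.
  apply sqrt_bound_final with xs; auto.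
  - lra.
  - split. lra. unfold E. assert (3 * (3 / 2^b) <= 9 * 2^m / 2^b).
    { unfold Rdiv. assert (0 < / 2^b) by (apply Rinv_0_lt_compat; auto). nra. }
    lra.
Qed.

Lemma sqrt_diff a c : / 2 <= a -> 1 <= c -> Rabs (sqrt a - sqrt c) <= Rabs (a - c) / (17/10).
Proof.
  intros Ha Hc.
  set (sa := sqrt a). set (sc := sqrt c).
  assert (Ea : sa * sa = a) by (apply sqrt_sqrt; lra).
  assert (Ec : sc * sc = c) by (apply sqrt_sqrt; lra).
  assert (Pa : 0 <= sa) by apply sqrt_pos.
  assert (Pc : 0 <= sc) by apply sqrt_pos.
  assert (Ga : 7/10 <= sa) by nra.
  assert (Gc : 1 <= sc) by nra.
  assert (a - c = (sa - sc) * (sa + sc)) by (rewrite <- Ea, <- Ec; ring).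
  destruct (Rle_dec sc sa).
  - rewrite (Rabs_right (sa - sc)) by lra. rewrite Rabs_right by nra.
    apply (Rmult_le_reg_r (17/10)). lra. field_simplify. nra.
  - rewrite (Rabs_left (sa - sc)) by lra. rewrite Rabs_left by nra.
    apply (Rmult_le_reg_r (17/10)). lra. field_simplify. nra.
Qed.

Lemma Rpower_ge1 w y : 1 < w -> 0 <= y -> 1 <= Rpower w y.
Proof. intros Hw Hy. rewrite <- (Rpower_O w) by lra. apply Rle_Rpower; lra. Qed.

Section Chain.
Variables (b m : nat) (w eps : R).
Hypothesis Hw : 1 < w <= 2 ^ m.
Hypothesis Hm : 2 <= 2 ^ m.
Hypothesis Heps : 0 <= eps <= / 6.
Hypothesis HS : forall z, / 2 <= z <= 2 ^ m -> Rabs (SQRT b z - sqrt z) <= eps.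

Lemma chain k : Rabs (pow2root b w (S k) - Rpower w (/ 2 ^ (S k))) <= 3 * eps.
Proof.
  induction k.
  - change (pow2root b w 1) with (SQRT b w). simpl. rewrite Rmult_1_r, Rpower_sqrt by lra.
    assert (Rabs (SQRT b w - sqrt w) <= eps) by (apply HS; lra). lra.
  - set (wh := pow2root b w (S k)) in *.
    set (W := Rpower w (/ 2 ^ S k)) in *.
    change (pow2root b w (S (S k))) with (SQRT b wh).
    assert (HW1 : 1 <= W) by (apply Rpower_ge1; [lra | left; apply Rinv_0_lt_compat, pow2_pos]).
    assert (HW2 : W <= sqrt w).
    { rewrite <- Rpower_sqrt by lra. apply Rle_Rpower. lra.
      simpl. assert (1 <= 2 ^ k) by (rewrite <- (pow1 k); apply pow_incr; lra).
      apply Rinv_le_contravar. lra. nra. }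
    assert (Hsw : sqrt w + / 2 <= 2 ^ m).
    { assert (sqrt w <= sqrt (2^m)) by (apply sqrt_le_1_alt; lra).
      set (t := sqrt (2^m)) in *.
      assert (t * t = 2^m) by (apply sqrt_sqrt; lra).
      assert (0 <= t) by apply sqrt_pos.
      assert (t + /2 <= t * t).
      { destruct (Rle_dec t (3/2)). lra.
        assert (0 <= (t - 3/2) * t) by (apply Rmult_le_pos; lra). lra. }
      lra. }
    assert (Hwh : / 2 <= wh <= 2 ^ m).
    { destruct (Rle_dec wh W); [rewrite Rabs_left1 in IHk by lra | rewrite Rabs_right in IHk by lra]; lra. }
    assert (HE : Rpower w (/ 2 ^ S (S k)) = sqrt W).
    { rewrite <- (Rpower_sqrt W) by lra. unfold W.
      rewrite Rpower_mult. f_equal. simpl. field. apply pow_nonzero. lra. }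
    rewrite HE.
    pose proof (HS wh Hwh) as H1.
    pose proof (sqrt_diff wh W ltac:(lra) HW1) as H2.
    replace (SQRT b wh - sqrt W) with ((SQRT b wh - sqrt wh) + (sqrt wh - sqrt W)) by ring.
    eapply Rle_trans. apply Rabs_triang.
    assert (Rabs (wh - W) / (17/10) <= 3 * eps / (17/10)).
    { unfold Rdiv. apply Rmult_le_compat_r; lra. }
    lra.
Qed.
End Chain.

Definition g (f : R) (k : nat) := IZR (floorR (2 ^ k * f)) / 2 ^ k.

Lemma g_step f k : g f (S k) = g f k + (if fbit f (S k) then / 2 ^ (S k) else 0).
Proof.
  unfold g, fbit.
  set (A := floorR (2 ^ k * f)).
  destruct (floorR_spec (2 ^ k * f)) as [H1 H2]. fold A in H1, H2.
  assert (Hs : 2 ^ S k * f = 2 * (2 ^ k * f)) by (simpl; ring).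
  pose proof (pow2_pos k).
  assert (HB : floorR (2 ^ S k * f) = (2 * A + (if Z.odd (floorR (2 ^ S k * f)) then 1 else 0))%Z).
  { destruct (Rlt_dec (2 ^ S k * f) (IZR (2 * A + 1))).
    - assert (E : floorR (2 ^ S k * f) = (2 * A)%Z).
      { apply floorR_unique. rewrite mult_IZR. rewrite plus_IZR, mult_IZR in r. lra. }
      rewrite E, Z.odd_even. lia.
    - assert (E : floorR (2 ^ S k * f) = (2 * A + 1)%Z).
      { apply floorR_unique. rewrite plus_IZR, mult_IZR. rewrite plus_IZR, mult_IZR in n. lra. }
      rewrite E, Z.odd_odd. lia. }
  rewrite HB at 1. destruct (Z.odd (floorR (2 ^ S k * f))).
  - rewrite plus_IZR, mult_IZR. simpl. field. lra.
  - rewrite Z.add_0_r, mult_IZR. simpl. field. lra.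
Qed.

Lemma g_nonneg f k : 0 <= f -> 0 <= g f k.
Proof.
  intro Hf. unfold g. destruct (floorR_spec (2 ^ k * f)) as [H1 H2].
  pose proof (pow2_pos k). assert (0 <= 2^k * f) by nra.
  assert ((-1 < floorR (2 ^ k * f))%Z) by (apply lt_IZR; lra).
  assert (0 <= IZR (floorR (2 ^ k * f))) by (apply IZR_le; lia).
  unfold Rdiv. apply Rmult_le_pos; auto. left; apply Rinv_0_lt_compat; auto.
Qed.

Lemma g_0 f : 0 <= f < 1 -> g f 0 = 0.
Proof.
  intro H. unfold g. simpl. replace (floorR (1 * f)) with 0%Z. simpl; field.
  symmetry; apply floorR_unique. simpl. lra.
Qed.

Lemma pow_ge1 x n : 1 <= x -> 1 <= x ^ n.
Proof. intro H. induction n. simpl; lra. simpl. nra. Qed.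

Section Loop.
Variables (b : nat) (w f delta : R).
Hypothesis Hw : 1 < w.
Hypothesis Hf : 0 <= f < 1.
Hypothesis Hdelta : 0 <= delta.
Hypothesis Hd : forall k, Rabs (pow2root b w (S k) - Rpower w (/ 2 ^ (S k))) <= delta.

Lemma loop k : Rabs (frac_loop b w f k - Rpower w (g f k))
   <= INR k * (delta + / 2 ^ b) * Rpower w (g f k) * (1 + delta) ^ k.
Proof.
  pose proof (pow2_pos b) as Hpb.
  assert (HT : 0 < / 2 ^ b) by (apply Rinv_0_lt_compat; auto).
  set (T := / 2 ^ b) in *.
  induction k.
  - simpl. rewrite g_0 by auto. rewrite Rpower_O by lra. rewrite Rminus_diag, Rabs_R0. lra.
  - set (z := frac_loop b w f k) in *.
    set (P := Rpower w (g f k)) in *.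
    assert (HP : 1 <= P) by (apply Rpower_ge1; auto; apply g_nonneg; lra).
    assert (Hq : 1 <= (1 + delta) ^ k) by (apply pow_ge1; lra).
    set (D := INR k * (delta + T) * P * (1 + delta) ^ k) in *.
    assert (HD : 0 <= D).
    { unfold D. apply Rmult_le_pos; [|lra]. apply Rmult_le_pos; [|lra].
      apply Rmult_le_pos; [apply pos_INR | lra]. }
    rewrite S_INR.
    replace ((INR k + 1) * (delta + T) * Rpower w (g f (S k)) * (1 + delta) ^ S k)
      with (D * (Rpower w (g f (S k)) / P) * (1 + delta) + (delta + T) * Rpower w (g f (S k)) * (1 + delta) ^ S k)
      by (unfold D; simpl; field; lra).
    change (frac_loop b w f (S k)) with
      (if fbit f (S k) then trunc b (z * pow2root b w (S k)) else z).
    rewrite g_step.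
    destruct (fbit f (S k)).
    + set (W := Rpower w (/ 2 ^ S k)).
      set (wh := pow2root b w (S k)).
      assert (HW : 1 <= W) by (apply Rpower_ge1; auto; left; apply Rinv_0_lt_compat, pow2_pos).
      assert (Hwh := Hd k). fold W wh in Hwh.
      rewrite Rpower_plus. fold P W.
      replace (P * W / P) with W by (field; lra).
      destruct (trunc_spec b (z * wh)) as [T1 T2]. fold T in T2.
      assert (Awh : Rabs wh <= W * (1 + delta)).
      { replace wh with (W + (wh - W)) by ring. eapply Rle_trans. apply Rabs_triang.
        rewrite Rabs_right by lra. nra. }
      replace (trunc b (z * wh) - P * W) with
        ((trunc b (z * wh) - z * wh) + (z - P) * wh + P * (wh - W)) by ring.
      eapply Rle_trans. apply Rabs_triang.
      eapply Rle_trans. apply Rplus_le_compat_r. apply Rabs_triang.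
      rewrite !Rabs_mult. rewrite (Rabs_right P) by lra.
      assert (R1 : Rabs (trunc b (z * wh) - z * wh) <= T).
      { rewrite Rabs_left1 by lra. lra. }
      assert (R2 : Rabs (z - P) * Rabs wh <= D * (W * (1 + delta))).
      { apply Rmult_le_compat; auto; apply Rabs_pos. }
      assert (R3 : P * Rabs (wh - W) <= P * delta) by (apply Rmult_le_compat_l; lra).
      assert (R4 : 1 <= W * (1 + delta) ^ S k).
      { simpl. assert (1 <= (1 + delta) * (1 + delta) ^ k) by nra. nra. }
      assert (R5 : T + P * delta <= (delta + T) * (P * W) * (1 + delta) ^ S k).
      { replace ((delta + T) * (P * W) * (1 + delta) ^ S k) with ((delta + T) * P * (W * (1 + delta) ^ S k)) by ring.
        assert ((delta + T) * P * 1 <= (delta + T) * P * (W * (1 + delta) ^ S k)).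
        { apply Rmult_le_compat_l; auto. nra. }
        nra. }
      nra.
    + rewrite Rplus_0_r. fold P. replace (P / P) with 1 by (field; lra).
      assert (0 <= (delta + T) * P * (1 + delta) ^ S k).
      { apply Rmult_le_pos. nra. apply pow_le; lra. }
      assert (D <= D * 1 * (1 + delta)) by nra. lra.
Qed.
End Loop.

Lemma bitsum_bound bits e k : 0 <= bitsum bits e k <= E2 (e + Z.of_nat k) - E2 e.
Proof.
  induction k.
  - simpl. rewrite Z.add_0_r. lra.
  - simpl bitsum. rewrite E2_powerRZ.
    assert (E2 (e + Z.of_nat (S k)) = 2 * E2 (e + Z.of_nat k)).
    { replace (e + Z.of_nat (S k))%Z with (e + Z.of_nat k + 1)%Z by lia.
      rewrite E2_add, E2_1. ring. }
    pose proof (E2_pos (e + Z.of_nat k)).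
    destruct (bits k); lra.
Qed.

Lemma bitsum_int bits nf k : exists N : Z, 2 ^ nf * bitsum bits (- Z.of_nat nf) k = IZR N.
Proof.
  induction k.
  - exists 0%Z. simpl. ring.
  - destruct IHk as [N HN]. simpl bitsum.
    destruct (bits k).
    + exists (N + Z.of_nat (2 ^ k))%Z. rewrite plus_IZR, <- INR_IZR_INZ, pow_INR.
      rewrite Rmult_plus_distr_l, HN. f_equal.
      rewrite E2_powerRZ, <- E2_nat, <- E2_add. simpl INR.
      replace (Z.of_nat nf + (- Z.of_nat nf + Z.of_nat k))%Z with (Z.of_nat k) by lia.
      rewrite E2_nat. reflexivity.
    + exists N. rewrite Rplus_0_r. auto.
Qed.

Lemma g_final f nf : (exists bits, f = bitsum bits (- Z.of_nat nf) nf) -> g f nf = f.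
Proof.
  intros [bits Hb]. destruct (bitsum_int bits nf nf) as [N HN]. rewrite <- Hb in HN.
  unfold g. rewrite HN. rewrite floorR_unique with (z := N) by lra.
  rewrite <- HN. pose proof (pow2_pos nf). field. lra.
Qed.

Lemma exp_sub1 x : 0 <= x -> exp x - 1 <= x * exp x.
Proof.
  intro Hx. pose proof (exp_ineq1_le (- x)). rewrite exp_Ropp in H.
  pose proof (exp_pos x).
  assert ((1 - x) * exp x <= / exp x * exp x) by (apply Rmult_le_compat_r; lra).
  rewrite Rinv_l in H1 by lra. nra.
Qed.

Lemma Rpower_lip w a c : 1 < w -> 0 <= a <= 1 -> 0 <= c <= 1 ->
  Rabs (Rpower w a - Rpower w c) <= w * ln w * Rabs (a - c).
Proof.
  intros Hw.
  assert (L : 0 < ln w) by (rewrite <- ln_1; apply ln_increasing; lra).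
  assert (key : forall a c, 0 <= a <= c -> c <= 1 ->
            0 <= Rpower w c - Rpower w a <= w * ln w * (c - a)).
  { intros a0 c0 [H1 H2] H3. unfold Rpower.
    replace (c0 * ln w) with (a0 * ln w + (c0 - a0) * ln w) by ring.
    rewrite exp_plus.
    assert (0 <= (c0 - a0) * ln w) by (apply Rmult_le_pos; lra).
    pose proof (exp_sub1 _ H).
    pose proof (exp_pos (a0 * ln w)).
    assert (1 <= exp ((c0 - a0) * ln w)) by (pose proof (exp_ineq1_le ((c0 - a0) * ln w)); lra).
    assert (Hew : exp (a0 * ln w) * exp ((c0 - a0) * ln w) <= w).
    { rewrite <- exp_plus. apply Rle_trans with (exp (ln w)); [| rewrite exp_ln; lra]. apply exp_le.
      replace (a0 * ln w + (c0 - a0) * ln w) with (c0 * ln w) by ring. nra. }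
    split. nra.
    assert (exp (a0 * ln w) * (exp ((c0 - a0) * ln w) - 1)
            <= exp (a0 * ln w) * ((c0 - a0) * ln w * exp ((c0 - a0) * ln w)))
      by (apply Rmult_le_compat_l; lra).
    assert ((c0 - a0) * ln w * (exp (a0 * ln w) * exp ((c0 - a0) * ln w)) <= (c0 - a0) * ln w * w)
      by (apply Rmult_le_compat_l; lra).
    nra. }
  intros Ha Hc. destruct (Rle_dec a c).
  - destruct (key a c) as [K1 K2]; try lra.
    rewrite Rabs_left1 by lra. rewrite Rabs_left1 by lra. lra.
  - destruct (key c a) as [K1 K2]; try lra.
    rewrite Rabs_right by lra. rewrite Rabs_right by lra. lra.
Qed.

Lemma exp_nat n x : exp (INR n * x) = exp x ^ n.
Proof.
  induction n. simpl. rewrite Rmult_0_l; apply exp_0.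
  rewrite S_INR. replace ((INR n + 1) * x) with (INR n * x + x) by ring.
  rewrite exp_plus, IHn. simpl. ring.
Qed.

Lemma pow2_le_exp n : 2 ^ n <= exp (INR n).
Proof.
  rewrite <- (Rmult_1_r (INR n)). rewrite exp_nat. apply pow_incr.
  pose proof (exp_ineq1_le 1). lra.
Qed.

Lemma exp_fifth : exp (/ 5) <= 5 / 4.
Proof.
  pose proof (exp_ineq1_le (- / 5)). rewrite exp_Ropp in H.
  pose proof (exp_pos (/5)).
  apply (Rmult_le_reg_r (/ exp (/5))). apply Rinv_0_lt_compat; auto.
  rewrite Rinv_r by lra. lra.
Qed.

Lemma exp_tenth : exp (/ 10) <= 10 / 9.
Proof.
  pose proof (exp_ineq1_le (- / 10)). rewrite exp_Ropp in H.
  pose proof (exp_pos (/10)).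
  apply (Rmult_le_reg_r (/ exp (/10))). apply Rinv_0_lt_compat; auto.
  rewrite Rinv_r by lra. lra.
Qed.

Lemma exp_half : exp (/ 2) <= 2.
Proof.
  pose proof (exp_ineq1_le (- / 2)). rewrite exp_Ropp in H.
  pose proof (exp_pos (/2)).
  apply (Rmult_le_reg_r (/ exp (/2))). apply Rinv_0_lt_compat; auto.
  rewrite Rinv_r by lra. lra.
Qed.

Lemma numeric (b m l nf : nat) : (40 <= b)%nat -> (1 <= nf)%nat ->
  5 * (INR l + 2 * INR m + ln (INR nf)) <= INR b ->
  INR nf * 2 ^ l * 4 ^ m * ((3/4) ^ b + 9 * 2 ^ m / 2 ^ b) <= / 12.
Proof.
  intros Hb Hnf Hineq.
  assert (Hln : 0 <= ln (INR nf)).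
  { destruct (Nat.eq_dec nf 1). subst. simpl. rewrite ln_1. lra.
    rewrite <- ln_1. left. apply ln_increasing. lra. apply lt_1_INR. lia. }
  pose proof (pos_INR l). pose proof (pos_INR m).
  set (K := INR nf * 2 ^ l * 4 ^ m).
  assert (HK : K <= exp (INR b * / 5)).
  { unfold K. replace (4 ^ m) with (2 ^ (2 * m)) by (rewrite pow_mult; f_equal; lra).
    rewrite <- (exp_ln (INR nf)) by (apply lt_0_INR; lia).
    pose proof (pow2_le_exp l). pose proof (pow2_le_exp (2 * m)).
    assert (exp (ln (INR nf)) * 2 ^ l * 2 ^ (2 * m) <= exp (ln (INR nf)) * exp (INR l) * exp (INR (2 * m))).
    { pose proof (exp_pos (ln (INR nf))). apply Rmult_le_compat. apply Rmult_le_pos; [lra | apply pow_le; lra]. apply pow_le; lra. 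
      apply Rmult_le_compat_l; lra. auto. }
    rewrite <- !exp_plus in H3. eapply Rle_trans. apply H3. apply exp_le.
    rewrite mult_INR. simpl INR. lra. }
  rewrite exp_nat in HK.
  assert (HK2 : K <= (5/4) ^ b).
  { eapply Rle_trans. apply HK. apply pow_incr. pose proof (exp_pos (/5)). pose proof exp_fifth. lra. }
  assert (H2m : 2 ^ m <= (10/9) ^ b).
  { eapply Rle_trans. apply pow2_le_exp.
    replace (INR m) with (INR b * / 10 - (INR b * / 10 - INR m)) by ring.
    eapply Rle_trans. apply (exp_le _ (INR b * / 10)). lra.
    rewrite exp_nat. apply pow_incr. pose proof (exp_pos (/10)). pose proof exp_tenth. lra. }
  assert (HK0 : 0 <= K) by (unfold K; apply Rmult_le_pos; [apply Rmult_le_pos; [apply pos_INR | apply pow_le; lra] | apply pow_le; lra]).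
  pose proof (pow2_pos b).
  assert (A1 : K * (3/4) ^ b <= (15/16) ^ 40).
  { eapply Rle_trans. apply Rmult_le_compat_r. apply pow_le; lra. apply HK2.
    rewrite <- Rpow_mult_distr. eapply Rle_trans. apply pow_dec with (m := 40%nat). lra. auto.
    right; f_equal; lra. }
  assert (A2 : K * (9 * 2 ^ m / 2 ^ b) <= 9 * (3/4) ^ 40).
  { assert (K * (9 * 2 ^ m / 2 ^ b) = 9 * (K * 2 ^ m * (/2) ^ b)).
    { rewrite pow_inv. field. lra. }
    rewrite H2. apply Rmult_le_compat_l. lra.
    assert (0 <= 2 ^ m) by (apply pow_le; lra).
    assert (0 <= (/2)^b) by (apply pow_le; lra).
    assert (K * 2 ^ m * (/2) ^ b <= (5/4)^b * (10/9)^b * (/2)^b).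
    { apply Rmult_le_compat_r; auto. apply Rmult_le_compat; auto. }
    eapply Rle_trans. apply H5. rewrite <- !Rpow_mult_distr.
    eapply Rle_trans. apply pow_incr with (y := 3/4). lra.
    apply pow_dec. lra. auto. }
  assert ((15/16)^40 <= 78/1000) by (simpl; lra).
  assert ((3/4)^40 <= 2/100000) by (simpl; lra).
  rewrite Rmult_plus_distr_l. lra.
Qed.

Lemma powerRZ_half l : powerRZ (1/2) (Z.of_nat l - 1) = 2 / 2 ^ l.
Proof.
  replace (Z.of_nat l - 1)%Z with (Z.of_nat l + (-1))%Z by lia.
  rewrite powerRZ_add by lra. rewrite <- pow_powerRZ. simpl.
  unfold Rdiv. rewrite Rpow_mult_distr. rewrite pow1, Rmult_1_l.
  rewrite pow_inv. field. apply pow_nonzero. lra.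
Qed.

Lemma ceilR_ge y : y <= IZR (ceilR y).
Proof. unfold ceilR. rewrite opp_IZR. destruct (floorR_spec (- y)). lra. Qed.

Lemma to_nat_ge c : IZR c <= INR (Z.to_nat c).
Proof.
  destruct (Z_lt_le_dec c 0).
  - pose proof (pos_INR (Z.to_nat c)). assert (IZR c < 0) by (apply IZR_lt in l; auto). lra.
  - rewrite INR_IZR_INZ, Z2Nat.id by auto. lra.
Qed.

Lemma fp_b_facts n m nf l : (40 <= fp_b n m nf l)%nat /\
   5 * (INR l + 2 * INR m + ln (INR nf)) <= INR (fp_b n m nf l).
Proof.
  unfold fp_b. split. lia.
  set (c := ceilR (5 * (INR l + 2 * INR m + ln (INR nf)))).
  pose proof (ceilR_ge (5 * (INR l + 2 * INR m + ln (INR nf)))). fold c in H.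
  pose proof (to_nat_ge c).
  assert (INR (Z.to_nat c) <= INR (Nat.max (Nat.max n nf) (Nat.max (Z.to_nat c) 40)))
    by (apply le_INR; lia).
  lra.
Qed.

Lemma core (n m nf l : nat) (w f : R) :
  1 < w -> fixed_repr n m w ->
  0 <= f <= 1 -> frac_repr nf f ->
  Rabs (FractionalPower w f n m nf l - Rpower w f) <= 2 / 2 ^ l.
Proof.
  intros Hw Hrep Hf Hfrep.
  pose proof (pow2_pos l) as Hpl.
  assert (R0 : 0 <= 2 / 2 ^ l) by (unfold Rdiv; apply Rmult_le_pos; [lra | left; apply Rinv_0_lt_compat; auto]).
  unfold FractionalPower. cbv zeta.
  destruct (Req_EM_T f 1) as [->|Hf1].
  { rewrite Rpower_1 by lra. rewrite Rminus_diag, Rabs_R0. auto. }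
  destruct (Req_EM_T f 0) as [->|Hf0].
  { rewrite Rpower_O by lra. rewrite Rminus_diag, Rabs_R0. auto. }
  destruct Hfrep as [Hc|Hbits]; [contradiction|].
  assert (Hnf : (1 <= nf)%nat).
  { destruct nf; [|lia]. exfalso. destruct Hbits as [bits Hb]. simpl in Hb. auto. }
  assert (Hwm : w <= 2 ^ m).
  { destruct Hrep as [bits Hb]. pose proof (bitsum_bound bits (Z.of_nat m - Z.of_nat n) n) as [_ H].
    replace (Z.of_nat m - Z.of_nat n + Z.of_nat n)%Z with (Z.of_nat m) in H by lia.
    rewrite E2_nat in H. pose proof (E2_pos (Z.of_nat m - Z.of_nat n)). lra. }
  assert (Hm1 : (1 <= m)%nat).
  { destruct m; [simpl in Hwm; lra | lia]. }
  assert (Hm2 : 2 <= 2 ^ m).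
  { replace 2 with (2 ^ 1) at 1 by (simpl; lra). apply Rle_pow; lra || lia. }
  set (b := fp_b n m nf l).
  destruct (fp_b_facts n m nf l) as [Hb40 Hbineq]. fold b in Hb40, Hbineq.
  pose proof (numeric b m l nf Hb40 Hnf Hbineq) as HKE.
  set (E := (3/4) ^ b + 9 * 2 ^ m / 2 ^ b) in *.
  set (K := INR nf * 2 ^ l * 4 ^ m) in *.
  pose proof (pow2_pos b) as Hpb. pose proof (pow2_pos m) as Hpm.
  assert (HE0 : 0 <= E).
  { unfold E. assert (0 <= (3/4)^b) by (apply pow_le; lra).
    assert (0 <= 9 * 2^m / 2^b). { unfold Rdiv. apply Rmult_le_pos. lra. left; apply Rinv_0_lt_compat; lra. } lra. }
  assert (H4m : 4 ^ m = 2 ^ m * 2 ^ m) by (rewrite <- Rpow_mult_distr; f_equal; lra).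
  assert (Hnf1 : 1 <= INR nf) by (apply (le_INR 1); auto).
  assert (Hl1 : 1 <= 2 ^ l) by (apply pow_ge1; lra).
  assert (HKm : 2 ^ m * 2 ^ m <= K).
  { unfold K. rewrite H4m. assert (1 <= INR nf * 2 ^ l) by nra.
    assert (0 <= 2^m * 2^m) by nra. nra. }
  assert (HmE : 2 ^ m * E <= / 12).
  { assert (2 ^ m <= K) by nra. assert (2^m * E <= K * E) by (apply Rmult_le_compat_r; lra). lra. }
  assert (HE12 : E <= / 2).
  { assert (E <= 2^m * E) by nra. lra. }
  assert (Hmb : 2 ^ m / 2 ^ b <= / 1000).
  { assert (H10 : (10 * m <= b)%nat).
    { apply INR_le. rewrite mult_INR. simpl INR.
      assert (0 <= INR l) by apply pos_INR.
      assert (0 <= ln (INR nf)).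
      { destruct (Nat.eq_dec nf 1). subst. simpl. rewrite ln_1. lra.
        rewrite <- ln_1. left. apply ln_increasing. lra. apply lt_1_INR. lia. }
      replace (INR 10) with 10 by (simpl; ring). lra. }
    replace b with (m + (b - m))%nat by lia. rewrite pow_add.
    assert (2 ^ 10 <= 2 ^ (b - m)) by (apply Rle_pow; lra || lia).
    simpl in H. pose proof (pow2_pos (b - m)).
    apply (Rmult_le_reg_r (2 ^ m * 2 ^ (b - m))). nra. field_simplify; nra. }
  set (eps := 2 * 2 ^ m * E).
  assert (HS : forall z, / 2 <= z <= 2 ^ m -> Rabs (SQRT b z - sqrt z) <= eps).
  { intros z Hz. apply SQRT_err; auto; lra. }
  assert (Heps : 0 <= eps <= / 6) by (unfold eps; nra).
  pose proof (chain b m w eps ltac:(lra) Hm2 Heps HS) as Hch.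
  set (delta := 3 * eps).
  assert (Hf' : 0 <= f < 1) by lra.
  pose proof (loop b w f delta Hw Hf' ltac:(unfold delta; lra) Hch nf) as HL.
  rewrite g_final in HL by auto.
  assert (Hwf : Rpower w f <= w).
  { rewrite <- (Rpower_1 w) at 2 by lra. apply Rle_Rpower; lra. }
  assert (Hwf1 : 1 <= Rpower w f) by (apply Rpower_ge1; lra).
  assert (Hnd : INR nf * delta <= / 2).
  { unfold delta, eps. assert (INR nf * 2 ^ m <= K).
    { unfold K. rewrite H4m. assert (1 <= 2^l * 2^m) by nra.
      assert (0 <= INR nf * 2 ^ m) by nra.
      assert (INR nf * 2 ^ m * 1 <= INR nf * 2 ^ m * (2^l * 2^m)) by (apply Rmult_le_compat_l; lra).
      replace (INR nf * 2 ^ l * (2 ^ m * 2 ^ m)) with (INR nf * 2 ^ m * (2^l * 2^m)) by ring. lra. }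
    assert (INR nf * 2 ^ m * E <= K * E) by (apply Rmult_le_compat_r; lra). nra. }
  assert (Hpd : (1 + delta) ^ nf <= 2).
  { eapply Rle_trans. apply pow_incr with (y := exp delta). split. unfold delta; lra.
    pose proof (exp_ineq1_le delta). lra.
    rewrite <- exp_nat. eapply Rle_trans. apply exp_le with (b := / 2). lra. apply exp_half. }
  assert (HT : / 2 ^ b <= 2 ^ m * E).
  { assert (/ 2 ^ b <= 9 * 2^m / 2^b). { unfold Rdiv. assert (0 < /2^b) by (apply Rinv_0_lt_compat; lra). nra. }
    assert ((3/4)^b >= 0) by (apply Rle_ge, pow_le; lra). unfold E in *. nra. }
  assert (Hpd0 : 0 <= (1 + delta) ^ nf) by (apply pow_le; unfold delta; lra).
  assert (Step1 : INR nf * (delta + / 2 ^ b) <= INR nf * (7 * 2 ^ m * E)).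
  { apply Rmult_le_compat_l. lra. unfold delta, eps. lra. }
  assert (Step2 : Rpower w f * (1 + delta) ^ nf <= 2 ^ m * 2).
  { apply Rmult_le_compat; lra. }
  assert (Step3 : INR nf * (delta + / 2 ^ b) * Rpower w f * (1 + delta) ^ nf
                  <= INR nf * (7 * 2 ^ m * E) * (2 ^ m * 2)).
  { rewrite Rmult_assoc. apply Rmult_le_compat; try lra.
    apply Rmult_le_pos. lra. unfold delta, eps. assert (0 < / 2^b) by (apply Rinv_0_lt_compat; lra). nra.
    nra. }
  assert (Step4 : INR nf * (7 * 2 ^ m * E) * (2 ^ m * 2) <= 2 / 2 ^ l).
  { assert (INR nf * (7 * 2 ^ m * E) * (2 ^ m * 2) = 14 * (INR nf * 4 ^ m * E)) by (rewrite H4m; ring).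
    rewrite H. assert (K = 2 ^ l * (INR nf * 4 ^ m)) by (unfold K; ring).
    apply (Rmult_le_reg_l (2 ^ l)). lra. field_simplify; [|lra].
    assert (2 ^ l * (INR nf * 4 ^ m * E) = K * E) by (rewrite H0; ring). nra. }
  lra.
Qed.

Theorem corollary2 (n m nf l : nat) (w F f : R) :
  1 < w -> fixed_repr n m w ->
  0 <= F <= 1 ->
  0 <= f <= 1 -> frac_repr nf f ->
  Rabs (F - f) <= / 2 ^ nf ->
  Rabs (FractionalPower w f n m nf l - Rpower w F)
    <= powerRZ (1/2) (Z.of_nat l - 1) + w * ln w / 2 ^ nf.
Proof.
  intros Hw Hrep HF Hf Hfrep HFf.
  rewrite powerRZ_half.
  pose proof (core n m nf l w f Hw Hrep Hf Hfrep) as H1.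
  pose proof (Rpower_lip w f F Hw Hf HF) as H2.
  assert (L : 0 <= w * ln w).
  { assert (0 < ln w) by (rewrite <- ln_1; apply ln_increasing; lra). nra. }
  assert (w * ln w * Rabs (f - F) <= w * ln w / 2 ^ nf).
  { rewrite Rabs_minus_sym. unfold Rdiv. apply Rmult_le_compat_l; auto. }
  replace (FractionalPower w f n m nf l - Rpower w F) with
    ((FractionalPower w f n m nf l - Rpower w f) + (Rpower w f - Rpower w F)) by ring.
  eapply Rle_trans. apply Rabs_triang. lra.
Qed.
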